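(* Let $p$ be a prime, $X$ a countable set, and let $A$ be a norm-closed sub-$\mathbb{Z}_p$-algebra of $\mathcal{B}(\mathbb{Q}_p(X))$ containing the identity. Let $e,f\in A$ be idempotents with $e\ne0$ and $\|e-f\|<1/\|e\|$. Then there is an invertible element $g\in A$ (with $g^{-1}\in A$) such that $g^{-1}eg=f$.
   Context: $\mathbb{Q}_p(X)$ is the set of maps $\xi:X\to\mathbb{Q}_p$ with $|\xi(i)|_p\le1$ for all but finitely many $i$, a $\mathbb{Z}_p$-module under coordinatewise operations, with the topology $\tau$ in which $A\subseteq\mathbb{Q}_p(X)$ is open iff for every finite $P\subseteq X$ the set $A\cap\big(\prod_{i\in P}\mathbb{Q}_p\times\prod_{j\in X\setminus P}\mathbb{Z}_p\big)$ is open in the product topology. $\mathcal{B}(\mathbb{Q}_p(X))$ is the algebra of $\tau$-continuous $\mathbb{Z}_p$-linear maps, with operator norm $\|T\|=\sup_{\|\xi\|\le1}\|T\xi\|$, $\|\xi\|=\max_i|\xi(i)|_p$. *)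

(* Defs.v *)
From HB Require Import structures.
From mathcomp Require Import all_boot all_order all_algebra.
From mathcomp Require Import boolp classical_sets functions cardinality reals.
Set Implicit Arguments. Unset Strict Implicit. Unset Printing Implicit Defensive.
Import Order.TTheory GRing.Theory Num.Theory.
Local Open Scope classical_set_scope.
Local Open Scope ring_scope.

(* The field Q_p.  (K, abs) is a model of the p-adic numbers: a complete   *)
(* non-archimedean valued field in which Q is dense and |p| = 1/p.  By     *)
(* Ostrowski's theorem such a pair is isometrically isomorphic to          *)
(* (Q_p, |.|_p), i.e. it is the completion of Q for the p-adic absolute    *)
Definition is_padic_field (p : nat) (R : realType) (K : fieldType)
    (abs : K -> R) : Prop :=
  (forall x : K, 0 <= abs x) /\
  (forall x : K, abs x = 0 <-> x = 0) /\
  (forall x y : K, abs (x * y) = abs x * abs y) /\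
  (forall x y : K, abs (x + y) <= Num.max (abs x) (abs y)) /\
  abs (p%:R) = (p%:R)^-1 /\
  (forall u : nat -> K,
     (forall eps : R, 0 < eps -> exists N : nat, forall m n : nat,
         (N <= m)%N -> (N <= n)%N -> abs (u m - u n) < eps) ->
     exists l : K, forall eps : R, 0 < eps ->
       exists N : nat, forall n : nat, (N <= n)%N -> abs (u n - l) < eps) /\
  (forall (x : K) (eps : R), 0 < eps -> exists q : rat, abs (x - ratr q) < eps).

Section QpX.
Variables (R : realType) (K : fieldType) (abs : K -> R) (X : Type).

Definition in_Zp (a : K) : Prop := abs a <= 1.

Record qvec := QVec {
  qv :> X -> K ;
  qv_fin : finite_set [set i | 1 < abs (qv i)] }.

(* sup norm ||u|| = max_i |u(i)|_p (0 for X empty) *)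
Definition vnorm (u : X -> K) : R := sup ([set 0] `|` range (fun i => abs (u i))).

(* operator norm; operators are compared as functions into X -> K so that  *)
(* differences need not be repackaged as elements of Q_p(X) *)
Definition opnorm (T : qvec -> (X -> K)) : R :=
  sup [set vnorm (T xi) | xi in [set xi : qvec | vnorm xi <= 1]].

Definition op_sub (T S : qvec -> qvec) : qvec -> (X -> K) :=
  fun xi i => T xi i - S xi i.

Definition in_SP (P : set X) (b : qvec) : Prop := forall j, ~ P j -> in_Zp (b j).

(* U \cap S_P is open in the product topology of S_P *)
Definition rel_open_SP (P : set X) (U : set qvec) : Prop :=
  forall a : qvec, in_SP P a -> U a ->
    exists F : set X, finite_set F /\
    exists eps : R, 0 < eps /\
      forall b : qvec, in_SP P b -> (forall i, F i -> abs (b i - a i) < eps) -> U b.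

Definition tau_open (U : set qvec) : Prop :=
  forall P : set X, finite_set P -> rel_open_SP P U.

Definition tau_continuous (T : qvec -> qvec) : Prop :=
  forall U : set qvec, tau_open U -> tau_open (T @^-1` U).

Definition Zp_linear (T : qvec -> qvec) : Prop :=
  (forall xi eta zeta : qvec, (forall i, zeta i = xi i + eta i) ->
      forall i, T zeta i = T xi i + T eta i) /\
  (forall (a : K) (xi zeta : qvec), in_Zp a -> (forall i, zeta i = a * xi i) ->
      forall i, T zeta i = a * T xi i).

Definition in_B (T : qvec -> qvec) : Prop := Zp_linear T /\ tau_continuous T.

Definition unital_subalgebra (A : set (qvec -> qvec)) : Prop :=
  (forall T, A T -> in_B T) /\
  A id /\
  (forall T S, A T -> A S -> exists U, A U /\ forall xi i, U xi i = T xi i + S xi i) /\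
  (forall (a : K) T, in_Zp a -> A T -> exists U, A U /\ forall xi i, U xi i = a * T xi i) /\
  (forall T S, A T -> A S -> A (T \o S)).

Definition norm_closed (A : set (qvec -> qvec)) : Prop :=
  forall T, in_B T ->
    (forall eps : R, 0 < eps -> exists S, A S /\ opnorm (op_sub S T) < eps) -> A T.

End QpX.

(* Main.v *)
Set Warnings "-notation-overridden,-ambiguous-paths,-notation-incompatible-prefix".
Require Import Defs.
From HB Require Import structures.
From mathcomp Require Import all_boot all_order all_algebra.
From mathcomp Require Import boolp classical_sets functions cardinality reals.
From mathcomp Require Import ring lra.
Import Order.TTheory GRing.Theory Num.Theory.
Local Open Scope classical_set_scope.
Local Open Scope ring_scope.
Set Implicit Arguments. Unset Strict Implicit. Unset Printing Implicit Defensive.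

Section Padic.
Variables (p : nat) (R : realType) (K : fieldType) (abs : K -> R).
Hypothesis pp : prime p.
Hypothesis hK : is_padic_field p abs.

Let P : R := p%:R.

Lemma abs_ge0 x : 0 <= abs x.
Proof. by case: hK. Qed.
Lemma abs_eq0 x : abs x = 0 <-> x = 0.
Proof. by case: hK => _ []. Qed.
Lemma absM x y : abs (x * y) = abs x * abs y.
Proof. by case: hK => _ [] _ []. Qed.
Lemma abs_ultra x y : abs (x + y) <= Num.max (abs x) (abs y).
Proof. by case: hK => _ [] _ [] _ []. Qed.
Lemma absp : abs p%:R = P^-1.
Proof. by case: hK => _ [] _ [] _ [] _ []. Qed.

Lemma abs0 : abs 0 = 0. Proof. by apply/abs_eq0. Qed.

Lemma P_gt1 : 1 < P.
Proof. by rewrite /P ltr1n prime_gt1. Qed.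
Lemma P_gt0 : 0 < P.
Proof. exact: lt_trans ltr01 P_gt1. Qed.
Lemma Pinv_lt1 : P^-1 < 1.
Proof. by rewrite invf_lt1 ?P_gt0 ?P_gt1. Qed.
Lemma Pinv_gt0 : 0 < P^-1.
Proof. by rewrite invr_gt0 P_gt0. Qed.

Lemma abs1 : abs 1 = 1.
Proof.
have h := absM 1 1; rewrite mulr1 in h.
have nz : abs 1 != 0 by apply/eqP => /abs_eq0 /eqP; rewrite oner_eq0.
by apply: (mulfI nz); rewrite mulr1 -h.
Qed.

Lemma absN1 : abs (-1) = 1.
Proof.
have h := absM (-1) (-1); rewrite mulrNN mulr1 abs1 in h.
have h0 := abs_ge0 (-1).
have : (abs (-1) - 1) * (abs (-1) + 1) = 0.
  by rewrite mulrDr !mulrBl -h; ring.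
move/eqP; rewrite mulf_eq0 => /orP [/eqP|]; first by move/eqP; rewrite subr_eq0 => /eqP.
by rewrite paddr_eq0 // ?oner_eq0 ?andbF.
Qed.

Lemma absN x : abs (- x) = abs x.
Proof. by rewrite -mulN1r absM absN1 mul1r. Qed.

Lemma absV x : abs (x^-1) = (abs x)^-1.
Proof.
have [->|nz] := eqVneq x 0; first by rewrite invr0 abs0 invr0.
have : abs x * abs x^-1 = 1 by rewrite -absM mulfV // abs1.
have ax : abs x != 0 by apply/eqP => /abs_eq0; apply/eqP.
by move=> h; rewrite -[abs x^-1]mul1r -(mulVf ax) -mulrA h mulr1.
Qed.

Lemma abs_addle x y c : abs x <= c -> abs y <= c -> abs (x + y) <= c.
Proof.
move=> hx hy; apply: le_trans (abs_ultra x y) _.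
by rewrite ge_max hx hy.
Qed.
Lemma abs_addlt x y c : abs x < c -> abs y < c -> abs (x + y) < c.
Proof.
move=> hx hy; apply: le_lt_trans (abs_ultra x y) _.
by rewrite gt_max hx hy.
Qed.
Lemma abs_suble x y c : abs x <= c -> abs y <= c -> abs (x - y) <= c.
Proof. by move=> hx hy; apply: abs_addle => //; rewrite absN. Qed.
Lemma abs_sublt x y c : abs x < c -> abs y < c -> abs (x - y) < c.
Proof. by move=> hx hy; apply: abs_addlt => //; rewrite absN. Qed.

Lemma abs_natr n : abs (n%:R) <= 1.
Proof.
elim: n => [|n IH]; first by rewrite abs0 ler01.
by rewrite -addn1 natrD; apply: abs_addle => //; rewrite abs1.
Qed.

Lemma abs_coprime n : coprime p n -> abs (n%:R) = 1.
Proof.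
move=> cop.
have [a _ ] := Bezoutl n (prime_gt0 pp).
rewrite (eqP cop) => /dvdnP [k hk].
have hK1 : (1 : K) = (k%:R) * p%:R - a%:R * n%:R.
  by rewrite -!natrM -hk natrD addrK.
apply/eqP; rewrite eq_le abs_natr /=; rewrite leNgt; apply/negP => lt1.
have : abs (1 : K) < 1.
  rewrite hK1; apply: abs_sublt.
    rewrite absM absp; apply: le_lt_trans Pinv_lt1.
    rewrite -[leRHS]mul1r; apply: ler_wpM2r; last exact: abs_natr.
    by rewrite invr_ge0 ltW // P_gt0.
  rewrite absM; apply: le_lt_trans lt1.
  rewrite -[leRHS]mul1r; apply: ler_wpM2r; [exact: abs_ge0 | exact: abs_natr].
by rewrite abs1 ltxx.
Qed.

Lemma abs_natr_pos n : (0 < n)%N -> abs (n%:R) = (P ^+ logn p n)^-1.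
Proof.
move=> n0; have [m cop hn] := pfactor_coprime pp n0.
rewrite {1}hn natrM absM abs_coprime // mul1r natrX.
elim: (logn p n) => [|k IH]; first by rewrite !expr0 abs1 invr1.
by rewrite !exprS absM IH absp invfM.
Qed.

Lemma abs_intr z : abs (z%:~R) = abs ((`|z|%N)%:R).
Proof.
case: z => n; first by [].
by rewrite NegzE mulrNz absN.
Qed.

Lemma abs_int_pos (z : int) : z != 0 -> exists k : nat, abs (z%:~R) = (P ^+ k)^-1.
Proof.
move=> z0; rewrite abs_intr; exists (logn p `|z|%N); apply: abs_natr_pos.
by rewrite absz_gt0.
Qed.

Lemma Pexp_ge1 k : 1 <= P ^+ k.
Proof. by rewrite exprn_ege1 // ltW // P_gt1. Qed.

Lemma abs_rat_disc q : abs (ratr q : K) < 1 -> abs (ratr q : K) <= P^-1.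
Proof.
rewrite /ratr absM absV.
have [n0|n0] := eqVneq (numq q) 0.
  by rewrite n0 mulr0z abs0 mul0r => _; rewrite ltW // Pinv_gt0.
have [a ->] := abs_int_pos n0.
have [b ->] := abs_int_pos (denq_neq0 q).
rewrite invrK.
have Pa := Pexp_ge1 a; have Pb := Pexp_ge1 b.
have Pa0 : 0 < P ^+ a by apply: lt_le_trans Pa.
rewrite mulrC ltr_pdivrMr // mul1r ler_pdivrMr // => lt.
have hab : (b < a)%N by move: lt; rewrite ltr_eXn2l // P_gt1.
have a0 : (0 < a)%N by apply: leq_ltn_trans hab.
rewrite -(prednK a0) exprS mulrA mulVf ?mul1r; last by rewrite gt_eqF // P_gt0.
by rewrite ler_eXn2l ?P_gt1 // -ltnS prednK.
Qed.

Lemma abs_disc x : abs x < 1 -> abs x <= P^-1.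
Proof.
move=> hx.
case: hK => _ [] _ [] _ [] _ [] _ [] _ dens.
have [q hq] := dens x (P^-1) Pinv_gt0.
have hq1 : abs (ratr q : K) < 1.
  have -> : (ratr q : K) = x - (x - ratr q) by ring.
  by apply: abs_sublt => //; apply: lt_trans hq Pinv_lt1.
have := abs_rat_disc hq1 => hq2.
have -> : x = (x - ratr q) + ratr q by ring.
by apply: abs_addle => //; exact: ltW.
Qed.

Lemma abs_pexp n : abs ((p%:R : K) ^+ n) = (P ^+ n)^-1.
Proof.
elim: n => [|n IH]; first by rewrite !expr0 abs1 invr1.
by rewrite !exprS absM IH absp invfM.
Qed.

Lemma pexp_neq0 n : (p%:R : K) ^+ n != 0.
Proof.
apply/eqP => /abs_eq0; rewrite abs_pexp => /eqP; rewrite invr_eq0.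
by rewrite gt_eqF // (lt_le_trans ltr01 (Pexp_ge1 _)).
Qed.

Lemma p_neq0 : (p%:R : K) != 0.
Proof. by have := pexp_neq0 1; rewrite expr1. Qed.

Lemma Pexp_gt0 n : 0 < P ^+ n.
Proof. exact: lt_le_trans ltr01 (Pexp_ge1 _). Qed.

Lemma exists_pow (r : R) : exists n, r < P ^+ n.
Proof.
have h0 : 0 <= Num.max r 0 by rewrite le_max lexx orbT.
have := archi_boundP h0; set m := Num.Def.archi_bound _ => hm.
exists m; apply: (@le_lt_trans _ _ (Num.max r 0)); first by rewrite le_max lexx.
apply: lt_le_trans hm _; rewrite /P -natrX ler_nat ltnW // ltn_expl // prime_gt1 //.
Qed.

Lemma exists_small (c eps : R) : 0 < eps -> exists n, (P ^+ n)^-1 * c < eps.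
Proof.
move=> e0; have [n hn] := exists_pow (c / eps).
exists n; rewrite mulrC ltr_pdivrMr ?Pexp_gt0 //.
by rewrite -ltr_pdivrMl // mulrC.
Qed.

Lemma small_zero (y : K) (c : R) : (forall n, abs y <= (P ^+ n)^-1 * c) -> y = 0.
Proof.
move=> h; apply/abs_eq0; apply/eqP; rewrite eq_le abs_ge0 andbT.
rewrite leNgt; apply/negP => hy.
have [n hn] := exists_small c hy.
by have := le_lt_trans (h n) hn; rewrite ltxx.
Qed.

Lemma disc_pow x k : abs x < (P ^+ k)^-1 -> abs x <= (P ^+ k.+1)^-1.
Proof.
move=> hx.
have h1 : abs (x * (p%:R ^+ k)^-1) < 1.
  rewrite absM absV abs_pexp invrK.
  by rewrite -ltr_pdivlMr ?Pexp_gt0 // mul1r.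
have := abs_disc h1; rewrite absM absV abs_pexp invrK => h2.
rewrite -ler_pdivlMr ?Pexp_gt0 // in h2.
by apply: le_trans h2 _; rewrite exprSr invfM mulrC.
Qed.

Lemma disc_powS x k : (P ^+ k) < abs x -> P ^+ k.+1 <= abs x.
Proof.
move=> hx; rewrite leNgt; apply/negP => hx2.
have h1 : abs (x * (p%:R ^+ k.+1)) < 1.
  by rewrite absM abs_pexp mulrC -ltr_pdivlMl ?invr_gt0 ?Pexp_gt0 // invrK mulr1.
have := abs_disc h1; rewrite absM abs_pexp => h2.
rewrite ler_pdivrMr ?Pexp_gt0 // exprS mulrA mulVf ?gt_eqF ?P_gt0 // mul1r in h2.
by move: (lt_le_trans hx h2); rewrite ltxx.
Qed.


Variable X : countType.
Local Notation V := (qvec abs X).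

Lemma qvec_ext (u v : V) : (forall i, u i = v i) -> u = v.
Proof.
case: u => fu hu; case: v => fv hv /= h.
have e : fu = fv by apply: funext.
subst fv; congr QVec; exact: Prop_irrelevance.
Qed.

Definition mkB (u : X -> K) (h : forall i, abs (u i) <= 1) : V.
Proof.
refine (@QVec R K abs X u _).
apply: (sub_finite_set _ (finite_set0 X)) => i /= hi.
by move: (lt_le_trans hi (h i)); rewrite ltxx.
Defined.

Lemma mkBE (u : X -> K) (h : forall i, abs (u i) <= 1) i : mkB h i = u i. Proof. by []. Qed.

Lemma zero_ball : forall i : X, abs ((fun _ => 0 : K) i) <= 1.
Proof. by move=> i; rewrite abs0 ler01. Qed.
Definition zeroV : V := mkB zero_ball.

Lemma sum_ge (s : seq X) (g : X -> R) i : (forall j, 0 <= g j) -> i \in s ->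
  g i <= \sum_(j <- s) g j.
Proof.
move=> g0; elim: s => [//|x s IH]; rewrite in_cons big_cons => /orP [/eqP ->|/IH h].
  by rewrite lerDl sumr_ge0.
by apply: le_trans h _; rewrite lerDr.
Qed.

Lemma qvec_bounded (xi : V) : exists a : K, a != 0 /\ forall i, abs (xi i) <= abs a.
Proof.
have /finite_fsetP [F hF] := qv_fin xi.
pose M := \sum_(j <- finmap.enum_fset F) abs (xi j) + 1.
have [n hn] := exists_pow M.
exists ((p%:R ^+ n)^-1); split; first by rewrite invr_eq0 pexp_neq0.
move=> i; rewrite absV abs_pexp invrK; apply: ltW; apply: le_lt_trans hn.
have [hi|hi] := pselect (1 < abs (xi i)).
  have iF : i \in finmap.enum_fset F.
    have : [set i | 1 < abs (xi i)] i by [].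
    by rewrite hF.
  apply: le_trans (sum_ge (g := fun j => abs (xi j)) _ iF) _; first by move=> j; exact: abs_ge0.
  by rewrite lerDl ler01.
rewrite /M -[abs (xi i)]add0r; apply: lerD; first by apply: sumr_ge0 => j _; exact: abs_ge0.
by rewrite leNgt; apply/negP.
Qed.

Section Lin.
Variable T : V -> V.
Hypothesis hT : Zp_linear T.

Lemma lin_add (x y z : V) : (forall i, z i = x i + y i) -> forall i, T z i = T x i + T y i.
Proof. by case: hT => h _; exact: h. Qed.

Lemma lin_zero (z : V) : (forall i, z i = 0) -> forall i, T z i = 0.
Proof.
move=> hz i; have h := lin_add (x:=z) (y:=z) (z:=z) _ i.
have : T z i + T z i = T z i + 0 by rewrite addr0 -h // => j; rewrite hz addr0.
by move/addrI.
Qed.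

Lemma lin_scale (a : K) (x z : V) : a != 0 -> (forall i, z i = a * x i) ->
  forall i, T z i = a * T x i.
Proof.
move=> a0 hz i; case: hT => _ hs.
have [ha|ha] := leP (abs a) 1; first exact: hs.
have hx : forall j, x j = a^-1 * z j by move=> j; rewrite hz mulrA mulVf ?mul1r.
have ha' : in_Zp abs (a^-1) by rewrite /in_Zp absV invf_le1 ?ltW // (lt_trans ltr01 ha).
by rewrite (hs _ _ _ ha' hx) mulrA mulfV ?mul1r.
Qed.

Lemma lin_opp (x z : V) : (forall i, z i = - x i) -> forall i, T z i = - T x i.
Proof.
move=> hz i; rewrite -mulN1r; apply: lin_scale => //; first by rewrite oppr_eq0 oner_eq0.
by move=> j; rewrite hz mulN1r.
Qed.

Lemma lin_sub (x y z : V) : (forall i, z i = x i - y i) -> forall i, T z i = T x i - T y i.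
Proof.
move=> hz i; have h := lin_add (x:=z) (y:=y) (z:=x) _ i.
by rewrite h ?addrK // => j; rewrite hz subrK.
Qed.
End Lin.

Definition hb (T : V -> V) (g : K) := forall (xi : V) (a : K), a != 0 ->
  (forall i, abs (xi i) <= abs a) -> forall i, abs (T xi i) <= abs (g * a).

Lemma ball_hb T g : Zp_linear T -> g != 0 ->
  (forall xi : V, (forall i, abs (xi i) <= 1) -> forall i, abs (T xi i) <= abs g) -> hb T g.
Proof.
move=> hT g0 hball xi a a0 hxi i.
have aa : 0 < abs a by rewrite lt_def abs_ge0 andbT; apply/eqP => /abs_eq0; apply/eqP.
have hb1 : forall j, abs ((fun j => a^-1 * xi j) j) <= 1.
  by move=> j; rewrite /= absM absV ler_pdivrMl // mulr1.
pose eta := mkB hb1.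
have e : T xi i = a * T eta i.
  by apply: (lin_scale hT a0) => j; rewrite mkBE mulrA mulfV ?mul1r.
rewrite e.
by rewrite !absM mulrC; apply: ler_wpM2r; [exact: ltW | exact: hball].
Qed.

Lemma hb_comp S T g d : hb S g -> hb T d -> d != 0 -> hb (S \o T) (g * d).
Proof.
move=> hS hT d0 xi a a0 hxi i /=; rewrite -mulrA.
apply: hS; first by rewrite mulf_neq0.
exact: hT.
Qed.

Lemma hb_ext (S T : V -> V) g : (forall xi i, S xi i = T xi i) -> hb T g -> hb S g.
Proof. by move=> h hT xi a a0 hxi i; rewrite h; exact: hT. Qed.

Lemma vnorm_le (u : X -> K) c : 0 <= c -> (forall i, abs (u i) <= c) -> vnorm abs u <= c.
Proof.
move=> c0 h; apply: ge_sup; first by exists 0; left.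
by move=> y [->|[i _ <-]].
Qed.

Lemma vnorm_ge (u : X -> K) M i : (forall j, abs (u j) <= M) -> abs (u i) <= vnorm abs u.
Proof.
move=> h; apply: ub_le_sup; last by right; exists i.
exists (Num.max M 0) => y [->|[j _ <-]]; rewrite le_max ?lexx ?orbT //.
by rewrite h.
Qed.

Lemma ball_iff (xi : V) : vnorm abs xi <= 1 <-> forall i, abs (xi i) <= 1.
Proof.
split; last by move=> h; apply: vnorm_le => //; exact: ler01.
move=> h i; apply: le_trans h.
have [a [_ ha]] := qvec_bounded xi.
exact: vnorm_ge ha.
Qed.

Lemma zeroV_ball : forall i, abs (zeroV i) <= 1.
Proof. by move=> i; rewrite /= abs0 ler01. Qed.

Lemma opnorm_le (T : V -> (X -> K)) c : 0 <= c ->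
  (forall xi : V, (forall i, abs (xi i) <= 1) -> forall i, abs (T xi i) <= c) -> opnorm T <= c.
Proof.
move=> c0 h; apply: ge_sup.
  by exists (vnorm abs (T zeroV)); exists zeroV => //; apply/ball_iff; exact: zeroV_ball.
move=> y [xi /ball_iff hxi <-]; apply: vnorm_le => //; exact: h.
Qed.

Lemma opnorm_ge (T : V -> (X -> K)) c (xi : V) i : 0 <= c ->
  (forall xi : V, (forall i, abs (xi i) <= 1) -> forall i, abs (T xi i) <= c) ->
  (forall i, abs (xi i) <= 1) -> abs (T xi i) <= opnorm T.
Proof.
move=> c0 h hxi; apply: le_trans (vnorm_ge i (h xi hxi)) _.
apply: ub_le_sup; last by exists xi => //; apply/ball_iff.
exists c => y [eta /ball_iff heta <-]; apply: vnorm_le => //; exact: h.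
Qed.

Definition Wset (F : set X) (eps : R) : set V :=
  [set y | (forall i, abs (y i) <= 1) /\ (forall i, F i -> abs (y i) < eps)].

Lemma W_open F eps : finite_set F -> 0 < eps -> tau_open (Wset F eps).
Proof.
move=> fF e0 Q fQ a SPa [Wa1 Wa2].
exists (Q `|` F); split; first by rewrite finite_setU.
exists (Num.min 1 eps); split; first by rewrite lt_min ltr01 e0.
move=> b SPb hb; split.
  move=> i; have [Qi|nQi] := pselect (Q i); last exact: SPb i nQi.
  move: (hb i (or_introl Qi)); rewrite lt_min => /andP [h1 _].
  have -> : b i = a i + (b i - a i) by rewrite addrC subrK.
  by apply: abs_addle => //; exact: ltW.
move=> i Fi; move: (hb i (or_intror Fi)); rewrite lt_min => /andP [_ h2].
have -> : b i = a i + (b i - a i) by rewrite addrC subrK.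
by apply: abs_addlt => //; exact: Wa2.
Qed.

Lemma cont_bound T : in_B T -> exists n, forall xi : V,
  (forall i, abs (xi i) <= 1) -> forall i, abs (T xi i) <= P ^+ n.
Proof.
case=> hlin hcont.
have hz : forall i, T zeroV i = 0 by apply: (lin_zero hlin).
have op := hcont _ (W_open (finite_set0 X) ltr01).
have SP0 : in_SP set0 zeroV by move=> j _; rewrite /in_Zp /= abs0 ler01.
have Wz : (T @^-1` Wset set0 1) zeroV.
  by split=> i; rewrite hz abs0 // ler01.
have [F [fF [eps [e0 H]]]] := op set0 (finite_set0 X) zeroV SP0 Wz.
have [n hn] := exists_small 1 e0.
exists n => xi hxi i.
have hb1 : forall j, abs ((fun j => p%:R ^+ n * xi j) j) <= 1.
  move=> j; rewrite /= absM abs_pexp; apply: mulr_ile1 => //.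
  - by rewrite invr_ge0 ltW // Pexp_gt0.
  - exact: abs_ge0.
  - by rewrite invf_le1 ?Pexp_gt0 ?Pexp_ge1.
pose b := mkB hb1.
have Hb : (T @^-1` Wset set0 1) b.
  apply: H; first by move=> j _; exact: hb1.
  move=> j _; rewrite mkBE /= subr0 absM abs_pexp; apply: le_lt_trans hn.
  by apply: ler_wpM2l; [rewrite invr_ge0 ltW // Pexp_gt0 | exact: hxi].
have e : T b i = p%:R ^+ n * T xi i by apply: (lin_scale hlin (pexp_neq0 n)).
have := Hb.1 i; rewrite e absM abs_pexp.
by rewrite mulrC -ler_pdivlMr ?invr_gt0 ?Pexp_gt0 // invrK mul1r.
Qed.

Lemma inB_hb T : in_B T -> exists g, g != 0 /\ hb T g.
Proof.
move=> hT; have [n hn] := cont_bound hT.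
exists ((p%:R ^+ n)^-1); split; first by rewrite invr_eq0 pexp_neq0.
apply: ball_hb; first by case: hT.
  by rewrite invr_eq0 pexp_neq0.
by move=> xi hxi i; rewrite absV abs_pexp invrK; exact: hn.
Qed.


Section Alg.
Variable A : set (V -> V).
Hypothesis hA : unital_subalgebra A.

Lemma A_inB T : A T -> in_B T. Proof. by case: hA => h _; exact: h. Qed.
Lemma A_lin T : A T -> Zp_linear T. Proof. by move/A_inB; case. Qed.
Lemma A_id : A id. Proof. by case: hA => _ []. Qed.
Lemma A_add T S : A T -> A S -> exists U, A U /\ forall xi i, U xi i = T xi i + S xi i.
Proof. by case: hA => _ [] _ [] h _; exact: h. Qed.
Lemma A_scale (a : K) T : abs a <= 1 -> A T -> exists U, A U /\ forall xi i, U xi i = a * T xi i.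
Proof. by case: hA => _ [] _ [] _ [] h _; exact: h. Qed.
Lemma A_comp T S : A T -> A S -> A (T \o S).
Proof. by case: hA => _ [] _ [] _ [] _ h; exact: h. Qed.
Lemma A_sub T S : A T -> A S -> exists U, A U /\ forall xi i, U xi i = T xi i - S xi i.
Proof.
move=> AT AS; have [N [AN hN]] : exists N, A N /\ forall xi i, N xi i = -1 * S xi i.
  by apply: A_scale => //; rewrite absN1.
have [U [AU hU]] := A_add AT AN; exists U; split => // xi i.
by rewrite hU hN mulN1r.
Qed.

Variables e f : V -> V.
Hypotheses (Ae : A e) (Af : A f) (ee : e \o e = e) (ff : f \o f = f).
Hypothesis nz : exists (xi : V) (i : X), e xi i <> 0.
Hypothesis hnorm : opnorm (op_sub e f) < (opnorm (fun xi => (e xi : X -> K)))^-1.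

Lemma ee_app xi : e (e xi) = e xi.
Proof. by have := congr1 (fun g => g xi) ee. Qed.
Lemma ff_app xi : f (f xi) = f xi.
Proof. by have := congr1 (fun g => g xi) ff. Qed.

Lemma hb_pow T g : hb T g -> g != 0 -> (forall xi, T (T xi) = T xi) -> forall n, hb T (g ^+ n.+1).
Proof.
move=> hT g0 idem; elim => [|n IH]; first by rewrite expr1.
apply: (@hb_ext _ (T \o T)); first by move=> xi i /=; rewrite idem.
by rewrite exprS; apply: hb_comp => //; rewrite expf_neq0.
Qed.

Lemma e_level : exists al : nat,
  (forall xi : V, (forall i, abs (xi i) <= 1) -> forall i, abs (e xi i) <= P ^+ al) /\
  P ^+ al <= opnorm (fun xi => (e xi : X -> K)).
Proof.
pose Q al := forall xi : V, (forall i, abs (xi i) <= 1) -> forall i, abs (e xi i) <= P ^+ al.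
have exQ : exists n, `[< Q n >] by have [n hn] := cont_bound (A_inB Ae); exists n; apply/asboolP.
case: (ex_minnP exQ) => al /asboolP Qal minal.
exists al; split => //.
suff [xi0 [i0 [b0 h0]]] : exists (xi : V) i, (forall j, abs (xi j) <= 1) /\ P ^+ al <= abs (e xi i).
  apply: le_trans h0 _; apply: (@opnorm_ge (fun xi => (e xi : X -> K)) (P ^+ al) xi0 i0) => //; exact: ltW (Pexp_gt0 _).
case: (pselect (exists (xi : V) i, (forall j, abs (xi j) <= 1) /\ P ^+ al <= abs (e xi i))) => // H.
exfalso; move: minal Qal H; case: al => [|k] minal Qal H.
  have hbe : hb e p%:R.
    apply: ball_hb; [exact: A_lin | exact: p_neq0 |].
    move=> xi hxi i; rewrite absp; apply: abs_disc; rewrite ltNge; apply/negP => h.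
    by apply: H; exists xi, i; split => //; rewrite expr0.
  have p0 : (p%:R : K) != 0 := p_neq0.
  have hbn := hb_pow hbe p0 ee_app.
  case: nz => xi [i]; apply.
  have [a [a0 ha]] := qvec_bounded xi.
  apply: (small_zero (c := abs a)) => n.
  apply: le_trans (hbn n xi a a0 ha i) _.
  rewrite absM abs_pexp; apply: ler_wpM2r; first exact: abs_ge0.
  rewrite lef_pV2 ?posrE ?Pexp_gt0 //.
  by rewrite ler_eXn2l ?P_gt1.
have Qk : Q k.
  move=> xi hxi i; rewrite leNgt; apply/negP => lt.
  by apply: H; exists xi, i; split => //; exact: disc_powS lt.
by have := minal k (asboolT Qk); rewrite ltnn.
Qed.


Lemma wz_setup : exists w z : V -> V, A w /\ A z /\ hb w p%:R /\
  (forall xi i, z xi i = xi i - w xi i) /\ (forall xi, e (z xi) = z (f xi)).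
Proof.
have [al [Qal hE]] := e_level.
have [V0 [AV hV]] := A_sub Ae Af.
have E0 : 0 < P ^+ al := Pexp_gt0 al.
have [n1 hn1] := cont_bound (A_inB AV).
have hD : forall xi : V, (forall i, abs (xi i) <= 1) -> forall i,
    abs (V0 xi i) <= opnorm (op_sub e f).
  move=> xi hxi i; rewrite hV.
  apply: (@opnorm_ge (op_sub e f) (P ^+ n1)) => //; first exact: ltW (Pexp_gt0 _).
  by move=> eta heta j; rewrite /op_sub -hV; exact: hn1.
have hEi : (opnorm (fun xi => (e xi : X -> K)))^-1 <= (P ^+ al)^-1.
  by rewrite lef_pV2 ?posrE // (lt_le_trans E0 hE).
have hV1 : forall xi : V, (forall i, abs (xi i) <= 1) -> forall i,
    abs (V0 xi i) <= (P ^+ al.+1)^-1.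
  move=> xi hxi i; apply: disc_pow.
  exact: le_lt_trans (hD xi hxi i) (lt_le_trans hnorm hEi).
have pa0 : (p%:R : K) ^+ al != 0 := pexp_neq0 al.
have hbV : hb V0 (p%:R ^+ al.+1).
  apply: ball_hb; [exact: A_lin | exact: pexp_neq0 |].
  by move=> xi hxi i; rewrite abs_pexp; exact: hV1.
have hbe : hb e ((p%:R ^+ al)^-1).
  apply: ball_hb; [exact: A_lin | by rewrite invr_eq0 |].
  by move=> xi hxi i; rewrite absV abs_pexp invrK; exact: Qal.
have hbf : hb f ((p%:R ^+ al)^-1).
  move=> xi a a0 ha i.
  have -> : f xi i = e xi i - V0 xi i by rewrite hV; ring.
  apply: abs_suble; first exact: hbe.
  apply: le_trans (hbV xi a a0 ha i) _.
  rewrite !absM; apply: ler_wpM2r; first exact: abs_ge0.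
  rewrite absV !abs_pexp invrK; apply: (@le_trans _ _ 1).
    by rewrite invf_le1 ?Pexp_gt0 ?Pexp_ge1.
  exact: Pexp_ge1.
have [U1 [AU1 hU1]] := A_add Ae Af.
have AEF := A_comp Ae Af.
have [U2 [AU2 hU2]] := A_sub AU1 AEF.
have [w [Aw hw]] := A_sub AU2 AEF.
have [z [Az hz]] := A_sub A_id Aw.
have linw : forall T, Zp_linear T -> forall xi i,
    T (w xi) i = T (e xi) i + T (f xi) i - T (e (f xi)) i - T (e (f xi)) i.
  move=> T hT xi i; rewrite (lin_sub hT (hw xi)) (lin_sub hT (hU2 xi)) (lin_add hT (hU1 xi)).
  by [].
have hwexp : forall xi i, w xi i = e (V0 xi) i - V0 (f xi) i.
  move=> xi i; rewrite (lin_sub (A_lin Ae) (hV xi)) ee_app hV ff_app hw hU2 hU1 /=.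
  ring.
exists w, z; split => //; split => //; split; last split => //.
  apply: (@hb_ext _ (fun xi => w xi)) => //.
  move=> xi a a0 ha i; rewrite hwexp; apply: abs_suble.
    have h := hb_comp hbe hbV (pexp_neq0 _) a0 ha i.
    by move: h; rewrite /= exprSr mulrA mulVf // mul1r.
  have h := hb_comp hbV hbf (invr_neq0 pa0) a0 ha i.
  have hs : (p%:R ^+ al * p%:R / p%:R ^+ al : K) = p%:R by rewrite mulrAC mulfV // mul1r.
  by move: h; rewrite /= exprSr hs.
move=> xi; apply: qvec_ext => i.
rewrite (lin_sub (A_lin Ae) (hz xi)) (linw _ (A_lin Ae)) hz hw hU2 hU1 /=.
rewrite !ee_app !ff_app; ring.
Qed.



End Alg.

Section Neumann.
Variable A : set (V -> V).
Hypothesis hA : unital_subalgebra A.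
Hypothesis hcl : norm_closed A.
Variables w z : V -> V.
Hypotheses (Aw : A w) (Az : A z) (hbw : hb w p%:R).
Hypothesis hz : forall xi i, z xi i = xi i - w xi i.

Lemma exS : exists S : nat -> (V -> V), (forall n, A (S n)) /\
  (forall xi i, S 0 xi i = 0) /\ (forall n xi i, S n.+1 xi i = xi i + w (S n xi) i).
Proof.
have step : forall T : V -> V, exists U : V -> V,
    A T -> A U /\ forall xi i, U xi i = xi i + w (T xi) i.
  move=> T; case: (pselect (A T)) => AT; last by exists T.
  have [U [AU hU]] := A_add hA (A_id hA) (A_comp hA Aw AT).
  by exists U => _; split.
have [g hg] := choice step.
have [Z [AZ hZ]] : exists Z, A Z /\ forall xi i, Z xi i = 0 * xi i.
  by apply: (A_scale hA) => //; [rewrite abs0 ler01 | exact: A_id].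
have AS : forall n, A (iter n g Z).
  by elim => [|n IH] //=; have [] := hg _ IH.
exists (fun n => iter n g Z); split => //; split.
  by move=> xi i /=; rewrite hZ mul0r.
by move=> n xi i /=; have [_ ->] := hg _ (AS n).
Qed.

Lemma hb_iter n : hb (iter n w) (p%:R ^+ n).
Proof.
elim: n => [|n IH]; first by move=> xi a a0 ha i /=; rewrite expr0 mul1r.
rewrite exprS; apply: (@hb_ext _ (w \o iter n w)) => //.
exact: hb_comp hbw IH (pexp_neq0 n).
Qed.

Lemma hbz : hb z 1.
Proof.
move=> xi a a0 ha i; rewrite hz mul1r; apply: abs_suble => //.
apply: le_trans (hbw a0 ha i) _; rewrite absM -[leRHS]mul1r.
apply: ler_wpM2r; first exact: abs_ge0.
by rewrite absp invf_le1 ?P_gt0 ?ltW ?P_gt1.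
Qed.

Theorem neumann : exists T : V -> V, A T /\ (forall xi, z (T xi) = xi) /\ (forall xi, T (z xi) = xi).
Proof.
have [S [AS [hS0 hSS]]] := exS.
have linS n := A_lin hA (AS n).
have linw := A_lin hA Aw.
have linz := A_lin hA Az.
have Sdiff : forall n xi i, S n.+1 xi i = S n xi i + iter n w xi i.
  elim => [|n IH] xi i.
    by rewrite hSS hS0 add0r (lin_zero linw (hS0 xi)) addr0.
  by rewrite hSS (lin_add linw (IH xi)) addrA -hSS.
have tail : forall (xi : V) a, a != 0 -> (forall j, abs (xi j) <= abs a) ->
    forall i n N, (n <= N)%N -> abs (S N xi i - S n xi i) <= (P ^+ n)^-1 * abs a.
  move=> xi a a0 ha i n; elim => [|N IH].
    rewrite leqn0 => /eqP ->; rewrite subrr abs0 mulr_ge0 ?abs_ge0 //.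
    by rewrite invr_ge0 ltW // Pexp_gt0.
  rewrite leq_eqVlt => /orP [/eqP <-|]; first by rewrite subrr abs0 mulr_ge0 ?abs_ge0 // invr_ge0 ltW // Pexp_gt0.
  rewrite ltnS => hnN.
  have -> : S N.+1 xi i - S n xi i = (S N xi i - S n xi i) + iter N w xi i by rewrite Sdiff; ring.
  apply: abs_addle; first exact: IH.
  apply: le_trans (hb_iter N a0 ha i) _; rewrite absM abs_pexp.
  apply: ler_wpM2r; first exact: abs_ge0.
  by rewrite lef_pV2 ?posrE ?Pexp_gt0 // ler_eXn2l ?P_gt1.
have exlim : forall xii : V * X, exists l : K, forall eps, 0 < eps ->
    exists N, forall n, (N <= n)%N -> abs (S n xii.1 xii.2 - l) < eps.
  case=> xi i /=.
  case: hK => _ [] _ [] _ [] _ [] _ [] compl _.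
  apply: compl => eps e0.
  have [a [a0 ha]] := qvec_bounded xi.
  have [N hN] := exists_small (abs a) e0.
  exists N => m n hm hn.
  have -> : S m xi i - S n xi i = (S m xi i - S N xi i) - (S n xi i - S N xi i) by ring.
  by apply: abs_sublt; apply: le_lt_trans hN; exact: tail.
have [Tf hTf] := choice exlim.
have Ttail : forall (xi : V) a, a != 0 -> (forall j, abs (xi j) <= abs a) ->
    forall n i, abs (S n xi i - Tf (xi, i)) <= (P ^+ n)^-1 * abs a.
  move=> xi a a0 ha n i; set c := _ * _.
  rewrite leNgt; apply/negP => hc.
  have x0 : 0 < abs (S n xi i - Tf (xi, i)).
    by apply: le_lt_trans hc; rewrite mulr_ge0 ?abs_ge0 // invr_ge0 ltW // Pexp_gt0.
  have [N hN] := hTf (xi, i) _ x0.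
  have hM := hN (maxn n N) (leq_maxr n N); rewrite /= in hM.
  have e : S n xi i - Tf (xi, i) =
      - (S (maxn n N) xi i - S n xi i) + (S (maxn n N) xi i - Tf (xi, i)) by ring.
  have : abs (S n xi i - Tf (xi, i)) < abs (S n xi i - Tf (xi, i)).
    rewrite {1}e; apply: abs_addlt => //; rewrite absN; apply: le_lt_trans hc.
    by apply: tail => //; exact: leq_maxl.
  by rewrite ltxx.
have Tt : forall xi : V, exists c, 0 <= c /\ forall n i, abs (Tf (xi, i) - S n xi i) <= (P ^+ n)^-1 * c.
  move=> xi; have [a [a0 ha]] := qvec_bounded xi.
  exists (abs a); split; first exact: abs_ge0.
  by move=> n i; rewrite -absN opprB; exact: Ttail.
have Tfin : forall xi : V, finite_set [set i | 1 < abs (Tf (xi, i))].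
  move=> xi; have [c [c0 hc]] := Tt xi.
  have [n hn] := exists_small c ltr01.
  apply: (sub_finite_set _ (qv_fin (S n xi))) => i /= hi.
  rewrite ltNge; apply/negP => hs.
  have : abs (Tf (xi, i)) <= 1.
    have -> : Tf (xi, i) = (Tf (xi, i) - S n xi i) + S n xi i by ring.
    by apply: abs_addle => //; apply: ltW; apply: le_lt_trans hn; exact: hc.
  by rewrite leNgt hi.
pose T (xi : V) : V := QVec (Tfin xi).
have TE : forall xi i, T xi i = Tf (xi, i) by [].
have Pn0 : forall n, 0 <= (P ^+ n)^-1 by move=> n; rewrite invr_ge0 ltW // Pexp_gt0.
have Tlin : Zp_linear T.
  split.
    move=> x y zz hxyz i; rewrite !TE.
    have [cx [cx0 hx]] := Tt x; have [cy [cy0 hy]] := Tt y; have [cz [cz0 hzz]] := Tt zz.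
    apply/eqP; rewrite -subr_eq0; apply/eqP.
    apply: (small_zero (c := cx + cy + cz)) => n.
    have -> : Tf (zz, i) - (Tf (x, i) + Tf (y, i)) =
        (Tf (zz, i) - S n zz i) - (Tf (x, i) - S n x i) - (Tf (y, i) - S n y i).
      by rewrite (lin_add (linS n) hxyz); ring.
    have mono : forall c, 0 <= c -> c <= cx + cy + cz -> (P ^+ n)^-1 * c <= (P ^+ n)^-1 * (cx + cy + cz).
      by move=> c c0 hc; apply: ler_wpM2l.
    apply: abs_suble; first apply: abs_suble.
    - apply: le_trans (hzz n i) _; apply: mono => //; lra.
    - apply: le_trans (hx n i) _; apply: mono => //; lra.
    - apply: le_trans (hy n i) _; apply: mono => //; lra.
  move=> a x zz ha hxz i; rewrite !TE.
  have [cx [cx0 hx]] := Tt x; have [cz [cz0 hzz]] := Tt zz.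
  apply/eqP; rewrite -subr_eq0; apply/eqP.
  apply: (small_zero (c := cx + cz)) => n.
  have -> : Tf (zz, i) - a * Tf (x, i) =
      (Tf (zz, i) - S n zz i) - a * (Tf (x, i) - S n x i).
    by rewrite (proj2 (linS n) _ _ _ ha hxz); ring.
  apply: abs_suble.
    apply: le_trans (hzz n i) _; apply: ler_wpM2l => //; lra.
  rewrite absM; apply: le_trans (_ : abs (Tf (x, i) - S n x i) <= _).
    by rewrite -[leRHS]mul1r; apply: ler_wpM2r => //; exact: abs_ge0.
  apply: le_trans (hx n i) _; apply: ler_wpM2l => //; lra.
have tail1 : forall (d : V), (forall j, abs (d j) <= 1) -> forall n i,
    abs (T d i - S n d i) <= (P ^+ n)^-1.
  move=> d hd n i; rewrite TE -absN opprB.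
  have hd1 : forall j, abs (d j) <= abs (1 : K) by move=> j; rewrite abs1.
  by have := Ttail d 1 (oner_neq0 K) hd1 n i; rewrite abs1 mulr1.
have Tcont : tau_continuous T.
  move=> U hU Q fQ a0 SPa Ua.
  have SPT : in_SP [set i | 1 < abs (T a0 i)] (T a0).
    by move=> j nj; rewrite /in_Zp leNgt; apply/negP.
  have [F' [fF' [eps' [e0' H']]]] := hU _ (qv_fin (T a0)) (T a0) SPT Ua.
  have [n hn] := exists_small 1 e0'; rewrite mulr1 in hn.
  have opW := (A_inB hA (AS n)).2 _ (W_open fF' e0').
  have hz0 : forall i, S n zeroV i = 0 by apply: (lin_zero (linS n)).
  have SP0 : in_SP set0 zeroV by move=> j _; rewrite /in_Zp /= abs0 ler01.
  have Wz : (S n @^-1` Wset F' eps') zeroV.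
    by split=> i; rewrite hz0 abs0 // ler01.
  have [F'' [fF'' [d [d0 H'']]]] := opW set0 (finite_set0 X) zeroV SP0 Wz.
  exists (Q `|` F''); split; first by rewrite finite_setU.
  exists (Num.min 1 d); split; first by rewrite lt_min ltr01 d0.
  move=> b SPb hb.
  have dd : forall i, abs ((fun i => b i - a0 i) i) <= 1.
    move=> i /=; have [Qi|nQi] := pselect (Q i).
      by move: (hb i (or_introl Qi)); rewrite lt_min => /andP [h1 _]; exact: ltW.
    by apply: abs_suble; [exact: SPb | exact: SPa].
  pose dv := mkB dd.
  have Hd : (S n @^-1` Wset F' eps') dv.
    apply: H''; first by move=> j _; exact: dd.
    move=> j Fj; rewrite mkBE /= subr0.
    by move: (hb j (or_intror Fj)); rewrite lt_min => /andP [_ h2].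
  have Tb : forall i, T b i = T a0 i + T dv i.
    by apply: (proj1 Tlin) => i; rewrite mkBE addrC subrK.
  have Tdv : forall i, T dv i = S n dv i + (T dv i - S n dv i) by move=> i; ring.
  have tl := tail1 dv dd n.
  have Pn1 : (P ^+ n)^-1 <= 1 by rewrite invf_le1 ?Pexp_gt0 ?Pexp_ge1.
  apply: H'.
    move=> j nj; rewrite /in_Zp Tb; apply: abs_addle.
      by rewrite leNgt; apply/negP.
    by rewrite Tdv; apply: abs_addle; [exact: Hd.1 | exact: le_trans (tl j) Pn1].
  move=> i Fi; rewrite Tb (_ : T a0 i + T dv i - T a0 i = T dv i); last by ring.
  by rewrite Tdv; apply: abs_addlt; [exact: Hd.2 | exact: le_lt_trans (tl i) hn].
have AT : A T.
  apply: hcl; first by split.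
  move=> eps e0; have [n hn] := exists_small 1 e0; rewrite mulr1 in hn.
  exists (S n); split => //; apply: le_lt_trans hn.
  apply: opnorm_le => // xi hxi i; rewrite /op_sub -absN opprB.
  exact: tail1.
have zw : forall (eta : V) i, z (w eta) i = w (z eta) i.
  move=> eta i; rewrite hz (lin_sub linw (hz eta)); by [].
have zS : forall n (xi : V) i, z (S n xi) i = xi i - iter n w xi i.
  elim => [|n IH] xi i.
    by rewrite (lin_zero linz (hS0 xi)) /= subrr.
  rewrite (lin_add linz (hSS n xi)) zw (lin_sub linw (IH xi)) hz /=; ring.
have Sz : forall n (xi : V) i, S n (z xi) i = xi i - iter n w xi i.
  elim => [|n IH] xi i.
    by rewrite hS0 /= subrr.
  rewrite hSS (lin_sub linw (IH xi)) hz /=; ring.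
exists T; split => //; split.
  move=> xi; apply: qvec_ext => i.
  have [a [a0 ha]] := qvec_bounded xi.
  apply/eqP; rewrite -subr_eq0; apply/eqP.
  apply: (small_zero (c := abs a)) => n.
  have [Rn [ARn hRn]] := A_sub hA AT (AS n).
  have e1 : z (T xi) i = z (S n xi) i + z (Rn xi) i.
    by apply: (lin_add linz) => j; rewrite hRn addrC subrK.
  rewrite e1 zS (_ : xi i - iter n w xi i + z (Rn xi) i - xi i = z (Rn xi) i - iter n w xi i); last by ring.
  have pa0 : (p%:R ^+ n * a) != 0 by rewrite mulf_neq0 ?pexp_neq0.
  have hR : forall j, abs (Rn xi j) <= abs (p%:R ^+ n * a).
    move=> j; rewrite hRn TE absM abs_pexp -absN opprB; exact: Ttail.
  apply: abs_suble.
    by have := hbz pa0 hR i; rewrite mul1r absM abs_pexp.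
  by have := hb_iter n a0 ha i; rewrite absM abs_pexp.
move=> xi; apply: qvec_ext => i.
have [a [a0 ha]] := qvec_bounded xi.
have hza : forall j, abs (z xi j) <= abs a.
  by move=> j; have := hbz a0 ha j; rewrite mul1r.
apply/eqP; rewrite -subr_eq0; apply/eqP.
apply: (small_zero (c := abs a)) => n.
have -> : T (z xi) i - xi i = - (S n (z xi) i - T (z xi) i) - iter n w xi i by rewrite Sz; ring.
apply: abs_suble; first by rewrite absN TE; exact: Ttail.
by have := hb_iter n a0 ha i; rewrite absM abs_pexp.
Qed.





End Neumann.
End Padic.

Unset Implicit Arguments.

Theorem lemma3p6 (p : nat) (R : realType) (K : fieldType) (abs : K -> R)
  (X : countType) (A : set (qvec abs X -> qvec abs X))
  (e f : qvec abs X -> qvec abs X) :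
  prime p ->
  is_padic_field p abs ->
  unital_subalgebra A ->
  norm_closed A ->
  A e -> A f ->
  e \o e = e -> f \o f = f ->
  (exists (xi : qvec abs X) (i : X), e xi i <> 0) ->
  opnorm (op_sub e f) < (opnorm (fun xi => (e xi : X -> K)))^-1 ->
  exists g ginv : qvec abs X -> qvec abs X,
    A g /\ A ginv /\ g \o ginv = id /\ ginv \o g = id /\
    ginv \o e \o g = f.
Proof.
move=> pp hK hA hcl Ae Af ee ff nz hn.
have [w [z [Aw [Az [hbw [hz hcom]]]]]] := wz_setup pp hK hA Ae Af ee ff nz hn.
have [T [AT [zT Tz]]] := neumann pp hK hA hcl Aw Az hbw hz.
exists z, T; split => //; split => //; split; [|split].
- by apply: funext => xi /=; rewrite zT.
- by apply: funext => xi /=; rewrite Tz.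
- by apply: funext => xi /=; rewrite hcom Tz.
Qed.
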